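(* Let $(L,\vee,\wedge,0,1)$ be a complemented modular lattice with $0\ne1$ and $a,b,c\in L$. Then: (i) if $\{a\}\le_1 b\to c$, then $a\wedge b\le c$; (ii) $a\wedge b\le c$ if and only if $\{a\wedge b\}\le_1 b\to c$.
   Context: For $a\in L$, $a^+:=\{x\in L\mid a\vee x=1,\ a\wedge x=0\}$ (the set of all complements of $a$). For $A,B\subseteq L$: $A\vee B:=\{x\vee y\mid x\in A,y\in B\}$; $A\le_1B$ means that for every $x\in A$ there exists $y\in B$ with $x\le y$. For $a,b\in L$ define the subset $a\to b:=a^+\vee\{a\wedge b\}=\{x\vee(a\wedge b)\mid x\in a^+\}$. *)

(* Defs.v *)
From HB Require Import structures.
From mathcomp Require Import all_boot all_order.
Set Implicit Arguments. Unset Strict Implicit. Unset Printing Implicit Defensive.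
Import Order.Theory.
Local Open Scope order_scope.

Definition modular_lattice {d} (L : latticeType d) : Prop :=
  forall x y z : L, x <= z -> x `|` (y `&` z) = (x `|` y) `&` z.

Definition compls {d} {L : tbLatticeType d} (a : L) : L -> Prop :=
  fun x => a `|` x = \top /\ a `&` x = \bot.

Definition complemented {d} (L : tbLatticeType d) : Prop :=
  forall a : L, exists x, compls a x.

Definition set_join {d} {L : latticeType d} (A B : L -> Prop) : L -> Prop :=
  fun z => exists x y, A x /\ B y /\ z = x `|` y.

Definition le1 {d} {L : latticeType d} (A B : L -> Prop) : Prop :=
  forall x, A x -> exists2 y, B y & x <= y.

Definition singleton {T : Type} (a : T) : T -> Prop := fun x => x = a.

Definition arrow {d} {L : tbLatticeType d} (a b : L) : L -> Prop :=
  set_join (compls a) (singleton (a `&` b)).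

(* Main.v *)
Require Import Defs.
From HB Require Import structures.
From mathcomp Require Import all_boot all_order.
Import Order.Theory.
Local Open Scope order_scope.

Lemma part1 (d : Order.disp_t) (L : tbLatticeType d)
  (Hmod : modular_lattice L) (a b c : L) :
  le1 (singleton a) (arrow b c) -> a `&` b <= c.
Proof.
move=> H; have [y [x [z [[Hx1 Hx2] [Hz ->]]]] Hay] := H a erefl.
rewrite /singleton in Hz; subst z.
have E := Hmod (b `&` c) x b (leIl b c).
rewrite (meetC x b) Hx2 joinx0 joinC in E.
have H1 : a `&` b <= b `&` c by rewrite E; exact: leI2 Hay (lexx b).
apply: (le_trans H1); exact: leIr.
Qed.

Theorem theorem2 (d : Order.disp_t) (L : tbLatticeType d)
  (Hmod : modular_lattice L) (Hcompl : complemented L)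
  (H01 : (\bot : L) != \top) (a b c : L) :
  (le1 (singleton a) (arrow b c) -> a `&` b <= c) /\
  (a `&` b <= c <-> le1 (singleton (a `&` b)) (arrow b c)).
Proof.
split; first exact: part1.
split.
- move=> Hab z Hz; rewrite /singleton in Hz; subst z.
  have [x Hx] := Hcompl b.
  exists (x `|` (b `&` c)); first by exists x, (b `&` c).
  apply: le_trans (leUr _ _).
  by rewrite lexI leIr Hab.
- move=> H; have := @part1 d L Hmod _ _ _ H.
  by rewrite -meetA meetxx.
Qed.
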